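(* Let $X$ be a second countable locally compact Abelian group and let $K$ be a compact subgroup of $X$. Let $\xi_1,\xi_2,\xi_3$ be independent identically distributed random variables with values in $X$ and distribution $m_K$. Let $\alpha$ be a random variable with a Bernoulli distribution taking the values $0$ and $1$ with probability $\frac12$ each, independent of $(\xi_1,\xi_2,\xi_3)$. Then the following are equivalent: (i) the linear forms $2\xi_1$ and $\xi_1+\xi_2+2\alpha\xi_3$ are identically distributed; (ii) $K$ is a Corwin group.
   Context: $m_K$ denotes the Haar probability distribution on the compact subgroup $K$. A group $K$ is a Corwin group if $\{2x:x\in K\}=K$. *)

(* Defs.v *)
From HB Require Import structures.
From mathcomp Require Import all_boot all_order all_algebra.
From mathcomp Require Import all_classical all_reals all_analysis.

Set Implicit Arguments.
Unset Strict Implicit.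
Unset Printing Implicit Defensive.

Import Order.TTheory GRing.Theory Num.Theory.
Local Open Scope classical_set_scope.
Local Open Scope ring_scope.

Definition borel (X : topologicalType) : set (set X) := <<s @open X >>.

Definition second_countable_LCA (X : topologicalZmodType) : Prop :=
  [/\ hausdorff_space X, locally_compact [set: X] & @second_countable X].

Definition is_subgroup (X : zmodType) (K : set X) : Prop :=
  K 0 /\ (forall x y, K x -> K y -> K (x - y)).

Definition corwin (X : zmodType) (K : set X) : Prop :=
  [set x *+ 2 | x in K] = K.

Section rv.
Context {d : measure_display} {T : measurableType d} {R : realType}.
Variable P : probability T R.

Definition X_rv (X : topologicalType) (f : T -> X) : Prop :=
  forall B, borel B -> measurable (f @^-1` B).

Definition law (X : Type) (f : T -> X) : set X -> \bar R :=
  fun B => P (f @^-1` B).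

Definition ident_distr (X : topologicalType) (f g : T -> X) : Prop :=
  forall B, borel B -> law f B = law g B.

End rv.

(** mu is the Haar probability distribution m_K of the compact subgroup K,
    viewed as a distribution on the Borel sets of X: it is concentrated on K
    (mu K = 1) and invariant under translations by elements of K. *)
Definition haar_prob_of (R : realType) (X : topologicalZmodType) (K : set X)
    (mu : set X -> \bar R) : Prop :=
  mu K = 1%E /\
  (forall x B, K x -> borel B -> mu [set x + y | y in B] = mu B).

(* Main.v *)
Require Import Defs.
From HB Require Import structures.
From mathcomp Require Import all_boot all_order all_algebra.
From mathcomp Require Import all_classical all_reals all_analysis.
From mathcomp Require Import finmap.
Import Order.TTheory GRing.Theory Num.Theory.
Local Open Scope classical_set_scope.
Local Open Scope ring_scope.

Section BXdef.
Variable X : topologicalZmodType.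
Definition BX : Type := X.
HB.instance Definition _ := Choice.on BX.
HB.instance Definition _ := isPointed.Build BX 0.
Lemma BXmC (A : set BX) : @borel X A -> @borel X (~` A).
Proof. by move=> bA; rewrite -setTD; exact: (sigma_algebraCD bA). Qed.
HB.instance Definition _ := @isMeasurable.Build default_measure_display BX
  (@borel X) (@sigma_algebra0 _ setT _) BXmC (@sigma_algebra_bigcup _ setT _).
End BXdef.

Section props.
Variable X : topologicalZmodType.
Lemma open_mBX (O : set X) : open O -> measurable (O : set (BX X)).
Proof. by move=> oO; exact: sub_sigma_algebra. Qed.

Lemma cont_mfun (f : X -> X) : continuous f -> measurable_fun setT (f : BX X -> BX X).
Proof.
move=> cf; apply: (@measurability _ _ (BX X) (BX X) setT f (@open X : set (set (BX X)))) => //.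
move=> _ [A oA <-]; rewrite setTI; apply: open_mBX.
by apply: open_comp => // x _; exact: cf.
Qed.

Hypothesis sc : @second_countable X.

Lemma open_prod_m (W : set (X * X)) : open W ->
  measurable (W : set (BX X * BX X)).
Proof.
move=> oW; case: sc => B cB [Bo hB].
pose U := set_type (B `*` B).
pose F (i : U) : set (BX X * BX X) :=
  [set z | (sval i).1 `*` (sval i).2 `<=` W /\ ((sval i).1 `*` (sval i).2) z].
have -> : W = \bigcup_i F i.
  apply/seteqP; split; last by move=> z [i _ [sW /sW]].
  move=> z Wz.
  have : nbhs z W by apply: open_nbhs_nbhs.
  move=> [[A1 A2] [/= nA1 nA2] sA].
  have [V1 [BV1 V1z] sV1] := hB z.1 A1 nA1.
  have [V2 [BV2 V2z] sV2] := hB z.2 A2 nA2.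
  have BB : (B `*` B) (V1, V2) by [].
  exists (SigSub (mem_set BB)) => //; split => /=.
    by move=> [a b] [/= /sV1 ? /sV2 ?]; apply: sA.
  by [].
apply: countable_bigcupT_measurable.
  rewrite /U (eq_countable (card_setT (B `*` B))).
  exact: countableX.
move=> i; rewrite /F; have [sW|nsW] := pselect ((sval i).1 `*` (sval i).2 `<=` W).
  have -> : [set z : BX X * BX X | (sval i).1 `*` (sval i).2 `<=` W /\ ((sval i).1 `*` (sval i).2) z]
     = ((sval i).1 : set (BX X)) `*` ((sval i).2 : set (BX X)).
    by apply/seteqP; split => z // [].
  case: i {sW} => -[b1 b2] /= /set_mem [Bb1 Bb2].
  by apply: measurableX; apply: open_mBX; apply: Bo.
have -> : [set z : BX X * BX X | (sval i).1 `*` (sval i).2 `<=` W /\ ((sval i).1 `*` (sval i).2) z] = set0.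
  by apply/seteqP; split => z // [].
exact: measurable0.
Qed.

Lemma add_mfun : measurable_fun setT (fun p : BX X * BX X => (p.1 + p.2 : BX X)).
Proof.
apply: (@measurability _ _ (BX X * BX X)%type (BX X) setT _ (@open X : set (set (BX X)))) => //.
move=> _ [A oA <-]; rewrite setTI; apply: open_prod_m.
apply: open_comp => // x _; exact: add_continuous.
Qed.
End props.

Section pf.
Context d d' (T : measurableType d) (Y : measurableType d') (R : realType).
Variables (Q : {finite_measure set T -> \bar R}) (f : T -> Y).
Variable mf : measurable_fun setT f.
Definition pf (_ : measurable_fun setT f) := pushforward Q f.
Let S := measure_function_pushforward__canonical__measure_function_Measure Q mf.
Let pf0 : pf mf set0 = 0%E. Proof. exact: (measure0 S). Qed.
Let pf_ge0 A : (0 <= pf mf A)%E. Proof. exact: (measure_ge0 S). Qed.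
Let pf_sa : semi_sigma_additive (pf mf). Proof. exact: (@measure_semi_sigma_additive _ _ _ S). Qed.
HB.instance Definition _ := isMeasure.Build _ _ _ (pf mf) pf0 pf_ge0 pf_sa.
Let pf_fin : fin_num_fun (pf mf).
Proof.
move=> A mA; rewrite /pf /pushforward; apply: fin_num_measure.
by rewrite -[X in measurable X]setTI; exact: mf.
Qed.
HB.instance Definition _ := Measure_isFinite.Build _ _ _ (pf mf) pf_fin.
End pf.
Arguments pf {d d' T Y R} Q {f} _ A.


Lemma mpre {d d'} {T : measurableType d} {Y : measurableType d'} {f : T -> Y} :
  measurable_fun setT f -> forall A, measurable A -> measurable (f @^-1` A).
Proof. by move=> mf A mA; rewrite -[X in measurable X]setTI; exact: mf. Qed.

Section core.
Context (R : realType) (X : topologicalZmodType) (sc : @second_countable X).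
Context (K : set X) (Ksub : is_subgroup K) (mK : measurable (K : set (BX X))).
Context d (T : measurableType d) (P : probability T R) (G : set T) (mG : measurable G).
Context (U W : T -> BX X) (mU : measurable_fun setT U) (mW : measurable_fun setT W).
Hypothesis inv : forall x (B : set (BX X)), K x -> measurable B ->
  P (U @^-1` [set x + y | y in B]) = P (U @^-1` B).
Hypothesis WK : P (W @^-1` (~` K) `&` G) = 0%E.
Hypothesis ind : forall A B : set (BX X), measurable A -> measurable B ->
  P (W @^-1` A `&` U @^-1` B `&` G) = (P (W @^-1` A `&` G) * P (U @^-1` B))%E.

Let Q := mrestr P mG.
Let mWU : measurable_fun setT (fun t => (W t, U t)) := measurable_fun_pair mW mU.
Let m1 := pf Q mW.
Let m2 := pf P mU.
Let m' := pf Q mWU.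

Lemma core_sum (B : set (BX X)) : measurable B ->
  P ((fun t => W t + U t) @^-1` B `&` G) = (P (U @^-1` B) * P G)%E.
Proof.
move=> mB.
pose D : set (BX X * BX X) := (fun p : BX X * BX X => (p.1 + p.2 : BX X)) @^-1` B.
have mD : measurable D.
  by rewrite -[D]setTI; apply: add_mfun.
have E1 : m' D = P ((fun t => W t + U t) @^-1` B `&` G) by [].
have PU : (m1 \x m2)%E D = m' D.
  apply: (@product_measure_unique _ _ _ _ _ m1 m2 m'); last exact: mD.
  move=> A1 A2 mA1 mA2.
  rewrite /m' /pf /pushforward /Q /mrestr /m1 /m2 /=.
  have -> : (fun t => (W t, U t)) @^-1` (A1 `*` A2) = W @^-1` A1 `&` U @^-1` A2 by [].
  by rewrite /mrestr ind.
rewrite -E1; transitivity ((m1 \x m2)%E D); first exact/esym/PU.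
rewrite /product_measure1.
have mf := @measurable_fun_xsection _ _ (BX X) (BX X) R m2 D mD.
rewrite -(setUv K) ge0_integral_setU //; last 3 first.
- exact: (@measurableC _ (BX X) K mK).
- by rewrite setUv.
- by rewrite /disj_set setICr.
rewrite [X in (_ + X)%E]null_set_integral //; last 2 first.
- exact: (@measurableC _ (BX X) K mK).
- exact: (measurable_funS (@measurableT _ (BX X)) (@subsetT _ _) mf).
rewrite adde0.
have -> : (\int[m1]_(x in K) (m2 \o xsection D) x = \int[m1]_(x in K) cst (P (U @^-1` B)) x)%E.
  apply: eq_integral => w /set_mem Kw /=.
  have -> : xsection D w = [set - w + y | y in B].
    apply/seteqP; split => u /=.
      rewrite /xsection /D /= in_setE /= => Bwu.
      by exists (w + u) => //; rewrite addKr.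
    move=> [y By <-]; rewrite /xsection /D /= in_setE /=.
    by rewrite addNKr.
  apply: inv => //.
  by have := Ksub.2 0 w Ksub.1 Kw; rewrite sub0r.
rewrite integral_cst //; congr (_ * _)%E.
rewrite /m1 /pf /pushforward /Q /mrestr.
have : P G = (P (W @^-1` K `&` G) + P (W @^-1` (~` K) `&` G))%E.
  rewrite -measureU.
  - rewrite -setIUl -preimage_setU setUv preimage_setT.
    by congr (P _); apply/seteqP; split => t // [].
  - by apply: measurableI => //; exact: mpre.
  - apply: measurableI => //; apply: mpre => //.
    exact: (@measurableC _ (BX X) K mK).
  - by rewrite setIACA -preimage_setI setICr preimage_set0 set0I.
by rewrite WK adde0 => ->.
Qed.
End core.

Section helpers.
Variable X : topologicalZmodType.

Lemma contD (f g : X -> X) : continuous f -> continuous g ->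
  continuous (fun x => f x + g x).
Proof.
move=> cf cg x.
apply: (@continuous_comp _ _ _ (fun x => (f x, g x)) (fun p : X * X => p.1 + p.2)).
  by apply: cvg_pair; [exact: cf | exact: cg].
exact: add_continuous.
Qed.

Lemma cont_trans (c : X) : continuous (fun x : X => x + c).
Proof. by apply: contD => // x; [exact: cvg_id | exact: cvg_cst]. Qed.

Lemma trans_eq (c : X) (B : set X) :
  [set c + y | y in B] = (fun z => z + - c) @^-1` B.
Proof.
apply/seteqP; split => z /=.
  by move=> [y By <-]; rewrite addrC addKr.
by move=> Bz; exists (z + - c) => //; rewrite addrC addrNK.
Qed.

Lemma open_trans (c : X) (V : set X) : open V -> open [set c + y | y in V].
Proof.
move=> oV; rewrite trans_eq; apply: open_comp => // x _; exact: cont_trans.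
Qed.

Hypothesis sc : @second_countable X.

Lemma mtrans_fun (c : X) : measurable_fun setT (fun x : BX X => (x + c : BX X)).
Proof. by apply: cont_mfun; exact: cont_trans. Qed.

Lemma mtrans (c : X) (B : set (BX X)) : measurable B ->
  measurable ([set c + y | y in B] : set (BX X)).
Proof. by move=> mB; rewrite trans_eq; exact: (mpre (mtrans_fun (- c)) _ mB). Qed.

Lemma mul_mfun n : measurable_fun setT (fun x : BX X => (x *+ n : BX X)).
Proof.
elim: n => [|n IH].
  have -> : (fun x : BX X => (x *+ 0 : BX X)) = cst (0 : BX X).
    by apply/funext => x; rewrite mulr0n.
  exact: measurable_cst.
have -> : (fun x : BX X => (x *+ n.+1 : BX X)) =
   (fun p : BX X * BX X => (p.1 + p.2 : BX X)) \o (fun x => (x, x *+ n)).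
  by apply/funext => x; rewrite mulrS.
apply: measurableT_comp; first exact: add_mfun.
exact: measurable_fun_pair.
Qed.

Lemma add_mfunT d (T : measurableType d) (f g : T -> BX X) :
  measurable_fun setT f -> measurable_fun setT g ->
  measurable_fun setT (fun t => (f t + g t : BX X)).
Proof.
move=> mf mg.
have -> : (fun t => (f t + g t : BX X)) =
   (fun p : BX X * BX X => (p.1 + p.2 : BX X)) \o (fun t => (f t, g t)) by [].
apply: measurableT_comp; first exact: add_mfun.
exact: measurable_fun_pair.
Qed.

Lemma mul_mfunT d (T : measurableType d) (f : T -> BX X) n :
  measurable_fun setT f -> measurable_fun setT (fun t => (f t *+ n : BX X)).
Proof.
move=> mf; have -> : (fun t => (f t *+ n : BX X)) = (fun x : BX X => (x *+ n : BX X)) \o f by [].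
apply: measurableT_comp => //; exact: mul_mfun.
Qed.

Lemma mix_mfun d (T : measurableType d) (alpha : T -> nat) (f : nat -> T -> BX X) :
  (forall S : set nat, measurable (alpha @^-1` S)) ->
  (forall n, measurable_fun setT (f n)) ->
  measurable_fun setT (fun t => f (alpha t) t).
Proof.
move=> ma mf _ B mB; rewrite setTI.
have -> : (fun t => f (alpha t) t) @^-1` B =
    \bigcup_n (alpha @^-1` [set n] `&` f n @^-1` B).
  apply/seteqP; split => t /=.
    by move=> Bt; exists (alpha t) => //.
  by move=> [n _ [/= -> ]].
apply: bigcupT_measurable => n; apply: measurableI => //.
exact: mpre.
Qed.
End helpers.

Definition PX (X : topologicalZmodType) : Type := X.
HB.instance Definition _ (X : topologicalZmodType) := Topological.on (PX X).
HB.instance Definition _ (X : topologicalZmodType) := isPointed.Build (PX X) 0.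

Section haarpos.
Context (R : realType) (X : topologicalZmodType) (sc : @second_countable X) (K : set X) (Kc : compact K).
Context d (T : measurableType d) (P : probability T R).
Context (U : T -> BX X) (mU : measurable_fun setT U).
Hypothesis UK : P (U @^-1` K) = 1%E.
Hypothesis inv : forall x (B : set (BX X)), K x -> measurable B ->
  P (U @^-1` [set x + y | y in B]) = P (U @^-1` B).
Hypothesis mK : measurable (K : set (BX X)).

Lemma haar_pos (V : set X) : open V -> V 0 -> (0 < P (U @^-1` V))%E.
Proof.
move=> oV V0.
have mV : measurable (V : set (BX X)) by exact: open_mBX.
rewrite lt0e measure_ge0 ?andbT.
apply/negP => /eqP PV0.
have Kc' : compact (K : set (PX X)) := Kc.
have Kcc : cover_compact (K : set (PX X)) by rewrite -compact_cover.
have := Kcc X K (fun x => [set x + y | y in V] : set (PX X)).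
case.
- by move=> i _; exact: open_trans.
- by move=> x Kx; exists x => //; exists 0 => //; rewrite addr0.
move=> D' sD' cov.
pose S : set X := [set` D'].
have : (P (U @^-1` K) <= \sum_(i \in S) P (U @^-1` [set (i + y)%R | y in V]))%E.
  apply: content_sub_fsum.
  - exact: finite_fset.
  - by move=> i _; apply: (mpre mU); exact: mtrans.
  - exact: (mpre mU _ mK).
  - move=> t Kt; have := cov _ Kt; move=> [i Di Vi]; exists i => //.
rewrite fsbig1 ?UK; first by rewrite lee_fin ler10.
move=> i Di; rewrite inv //; have := sD' i Di; by rewrite in_setE.
Qed.
End haarpos.

Lemma null_comp (R : realType) d (T : measurableType d) (P : probability T R)
  (X : topologicalZmodType) (f : T -> BX X) (mf : measurable_fun setT f)
  (K : set X) (mK : measurable (K : set (BX X))) :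
  P (f @^-1` K) = 1%E -> forall G, measurable G -> P (f @^-1` (~` K) `&` G) = 0%E.
Proof.
move=> fK G mG.
have h0 : P (f @^-1` (~` K)) = 0%E.
  by rewrite preimage_setC probability_setC ?fK ?subee //; exact: (mpre mf).
apply: (subset_measure0 _ _ _ h0).
- apply: measurableI => //; apply: (mpre mf); exact: measurableC.
- apply: (mpre mf); exact: measurableC.
- exact: subIsetl.
Qed.

Arguments null_comp {R d T P X f} mf {K} mK.

Lemma subK_add (X : zmodType) (K : set X) : is_subgroup K ->
  forall x y, K x -> K y -> K (x + y).
Proof.
move=> [K0 KB] x y Kx Ky; have := KB x (0 - y) Kx (KB 0 y K0 Ky).
by rewrite sub0r opprK.
Qed.

Lemma subK_opp (X : zmodType) (K : set X) : is_subgroup K ->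
  forall x, K x -> K (- x).
Proof. by move=> [K0 KB] x Kx; have := KB 0 x K0 Kx; rewrite sub0r. Qed.

Lemma subK_mul (X : zmodType) (K : set X) : is_subgroup K ->
  forall x n, K x -> K (x *+ n).
Proof.
move=> Ks x n Kx; elim: n => [|n IH]; first by rewrite mulr0n; case: Ks.
by rewrite mulrS; apply: subK_add.
Qed.

Theorem proposition2p6
  (R : realType) (X : topologicalZmodType) (K : set X)
  (d : measure_display) (T : measurableType d) (P : probability T R)
  (xi1 xi2 xi3 : T -> X) (alpha : T -> nat) :
  second_countable_LCA X ->
  compact K -> is_subgroup K ->
  X_rv xi1 -> X_rv xi2 -> X_rv xi3 ->
  haar_prob_of K (law P xi1) ->
  haar_prob_of K (law P xi2) ->
  haar_prob_of K (law P xi3) ->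
  (forall S : set nat, measurable (alpha @^-1` S)) ->
  law P alpha [set 0%N] = (1 / 2)%:E ->
  law P alpha [set 1%N] = (1 / 2)%:E ->
  (forall B1 B2 B3 (S : set nat), borel B1 -> borel B2 -> borel B3 ->
     P (xi1 @^-1` B1 `&` xi2 @^-1` B2 `&` xi3 @^-1` B3 `&` alpha @^-1` S)
     = (law P xi1 B1 * law P xi2 B2 * law P xi3 B3 * law P alpha S)%E) ->
  (ident_distr P (fun t => xi1 t *+ 2)
                 (fun t => xi1 t + xi2 t + xi3 t *+ (2 * alpha t)%N)
   <-> corwin K).
Proof.
move=> [hs lc sc] Kc Ks rv1 rv2 rv3 [K1 inv1] [K2 inv2] [K3 inv3] ma _ _ ind.
rewrite /law in K1 K2 K3 inv1 inv2 inv3.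
have mK : measurable (K : set (BX X)).
  rewrite -(setCK K); apply: measurableC; apply: open_mBX.
  by apply: closed_openC; exact: compact_closed.
have m1 : measurable_fun setT (xi1 : T -> BX X) by move=> _ B mB; rewrite setTI; exact: rv1.
have m2 : measurable_fun setT (xi2 : T -> BX X) by move=> _ B mB; rewrite setTI; exact: rv2.
have m3 : measurable_fun setT (xi3 : T -> BX X) by move=> _ B mB; rewrite setTI; exact: rv3.
pose Z := fun t => (xi3 t *+ (2 * alpha t)%N : BX X).
have mZ : measurable_fun setT Z.
  apply: (@mix_mfun X _ T alpha (fun n t => (xi3 t *+ (2 * n)%N : BX X))) => // n.
  exact: mul_mfunT.
pose Y := fun t => (xi1 t + xi2 t + xi3 t *+ (2 * alpha t)%N : BX X).
have mY : measurable_fun setT Y.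
  apply: (@mix_mfun X _ T alpha (fun n t => (xi1 t + xi2 t + xi3 t *+ (2 * n)%N : BX X))) => // n.
  by apply: add_mfunT => //; [exact: add_mfunT | exact: mul_mfunT].
pose h1 := fun t => (xi1 t *+ 2 : BX X).
have mh1 : measurable_fun setT h1 by exact: mul_mfunT.
have PT : P setT = 1%E by exact: probability_setT.
have I12 : forall A B : set (BX X), measurable A -> measurable B ->
    P (xi1 @^-1` A `&` xi2 @^-1` B) = (P (xi1 @^-1` A) * P (xi2 @^-1` B))%E.
  move=> A B mA mB.
  have := ind A B setT setT mA mB (@measurableT _ (BX X)).
  by rewrite /law !preimage_setT !setIT PT !mule1.
have IZ : forall A B C : set (BX X), measurable A -> measurable B -> measurable C ->
    P (xi1 @^-1` A `&` xi2 @^-1` B `&` Z @^-1` C) =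
    (P (xi1 @^-1` A `&` Z @^-1` C) * P (xi2 @^-1` B))%E.
  move=> A B C mA mB mC.
  pose Cn n := (fun x : BX X => (x *+ (2 * n)%N : BX X)) @^-1` C.
  have mCn n : measurable (Cn n) by exact: (mpre (@mul_mfun X sc (2 * n)%N) _ mC).
  pose E n := xi3 @^-1` Cn n `&` alpha @^-1` [set n].
  have ZE : Z @^-1` C = \bigcup_n E n.
    apply/seteqP; split => t /=.
      by move=> Ct; exists (alpha t) => //.
    by move=> [n _ [/= C3 an]]; rewrite /Z an.
  have mE n : measurable (E n).
    by apply: measurableI => //; exact: (mpre m3).
  have tE : trivIset setT E.
    by move=> i j _ _ [t [[_ ai] [_ aj]]]; rewrite -ai -aj.
  have mA1 := mpre m1 _ mA.
  have mB2 := mpre m2 _ mB.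
  rewrite ZE !setI_bigcupr.
  rewrite (measure_bigcup P [set: nat] (fun i => xi1 @^-1` A `&` xi2 @^-1` B `&` E i)); last 2 first.
  - by move=> n _; apply: measurableI => //; apply: measurableI.
  - exact: trivIset_setIl.
  rewrite (measure_bigcup P [set: nat] (fun i => xi1 @^-1` A `&` E i)); last 2 first.
  - by move=> n _; apply: measurableI.
  - exact: trivIset_setIl.
  have fB : P (xi2 @^-1` B) = (fine (P (xi2 @^-1` B)))%:E.
    by rewrite fineK // fin_num_measure.
  rewrite fB muleC -nneseriesZl; last by move=> n _; exact: measure_ge0.
  apply: eq_eseriesr => n _.
  have := ind A setT (Cn n) [set n] mA (@measurableT _ (BX X)) (mCn n).
  rewrite /law preimage_setT setIT PT mule1 => e1.
  rewrite /E !setIA.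
  change (P (xi1 @^-1` A `&` xi2 @^-1` B `&` xi3 @^-1` Cn n `&` alpha @^-1` [set n]) = ((fine (P (xi2 @^-1` B)))%:E * P (xi1 @^-1` A `&` xi3 @^-1` Cn n `&` alpha @^-1` [set n]))%E).
  rewrite e1 (ind _ _ _ _ mA mB (mCn n)).
  rewrite /law fineK; last by apply: fin_num_measure.
  by rewrite -!muleA muleCA.
have h1K : P (h1 @^-1` K) = 1%E.
  apply/eqP; rewrite eq_le probability_le1 /=; last exact: (mpre mh1).
  rewrite -[X in (X <= _)%E]K1; apply: le_measure; rewrite ?in_setE.
  - exact: (mpre m1).
  - exact: (mpre mh1).
  - by move=> t /= Kt; rewrite /h1; apply: subK_mul.
have ZK : P (Z @^-1` K) = 1%E.
  apply/eqP; rewrite eq_le probability_le1 /=; last exact: (mpre mZ).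
  rewrite -[X in (X <= _)%E]K3; apply: le_measure; rewrite ?in_setE.
  - exact: (mpre m3).
  - exact: (mpre mZ).
  - by move=> t /= Kt; rewrite /Z; apply: subK_mul.
have mT : measurable (setT : set T) by exact: measurableT.
split; last first.
  move=> cw B mB.
  have inv_h1 : forall x (B : set (BX X)), K x -> measurable B ->
      P (h1 @^-1` [set x + y | y in B]) = P (h1 @^-1` B).
    move=> x B' Kx mB'.
    have : [set x *+ 2 | x in K] x by rewrite cw.
    move=> [y Ky <-].
    have -> : h1 @^-1` [set y *+ 2 + z | z in B'] =
        xi1 @^-1` [set y + w | w in (fun u : X => u *+ 2) @^-1` B'].
      apply/seteqP; split => t /=.
        move=> [z Bz e]; exists (xi1 t - y); last by rewrite addrC subrK.
        by rewrite /= mulrnBl -/(h1 t) -e addrC addKr.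
      move=> [w Bw e]; exists (w *+ 2) => //.
      by rewrite /h1 -e mulrnDl.
    by rewrite inv1 //; exact: (mpre (@mul_mfun X sc 2) _ mB').
  have c1 := @core_sum R X sc K Ks mK d T P setT mT xi2 h1 m2 mh1 inv2
    (null_comp mh1 mK h1K _ mT)
    (fun A B mA mB => ltac:(rewrite !setIT; exact: (I12 _ _ (mpre (@mul_mfun X sc 2) _ mA) mB))).
  have c2 := @core_sum R X sc K Ks mK d T P setT mT h1 xi2 mh1 m2 inv_h1
    (null_comp m2 mK K2 _ mT)
    (fun A B mA mB => ltac:(rewrite !setIT setIC muleC; exact: (I12 _ _ (mpre (@mul_mfun X sc 2) _ mB) mA))).
  have LawH : forall B : set (BX X), measurable B -> P (h1 @^-1` B) = P (xi2 @^-1` B).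
    move=> B' mB'; have := c2 B' mB'; rewrite PT mule1 => <-.
    have := c1 B' mB'; rewrite PT mule1 => <-.
    by congr (P (_ `&` _)); apply/seteqP; split => t /=; rewrite addrC.
  have c3 : forall C : set (BX X), measurable C -> forall B : set (BX X), measurable B ->
      P ((fun t => (xi1 t + xi2 t : BX X)) @^-1` B `&` Z @^-1` C) =
      (P (xi2 @^-1` B) * P (Z @^-1` C))%E.
    move=> C mC.
    exact: (@core_sum R X sc K Ks mK d T P (Z @^-1` C) (mpre mZ _ mC) xi2 xi1 m2 m1 inv2
      (null_comp m1 mK K1 _ (mpre mZ _ mC))
      (fun A B mA mB => IZ A B C mA mB mC)).
  pose V := fun t => (xi1 t + xi2 t : BX X).
  have mV : measurable_fun setT V by exact: add_mfunT.
  have lawV : forall B : set (BX X), measurable B -> P (V @^-1` B) = P (xi2 @^-1` B).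
    move=> B' mB'; have := c3 setT (@measurableT _ (BX X)) B' mB'.
    by rewrite preimage_setT setIT PT mule1.
  have invV : forall x (B : set (BX X)), K x -> measurable B ->
      P (V @^-1` [set x + y | y in B]) = P (V @^-1` B).
    move=> x B' Kx mB'; rewrite !lawV //; last exact: mtrans.
    exact: inv2.
  have ind4 : forall A B : set (BX X), measurable A -> measurable B ->
      P (Z @^-1` A `&` V @^-1` B `&` setT) = (P (Z @^-1` A `&` setT) * P (V @^-1` B))%E.
    move=> A B' mA mB'; rewrite !setIT setIC c3 // lawV //; exact: muleC.
  have c4 := @core_sum R X sc K Ks mK d T P setT mT V Z mV mZ invV
    (null_comp mZ mK ZK _ mT) ind4.
  rewrite /law.
  have := LawH B mB; rewrite /h1 => ->.
  have := c4 B mB; rewrite PT mule1 lawV // setIT => <-.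
  by congr (P _); apply/seteqP; split => t /=; rewrite /V /Z addrC.
move=> idd; apply/seteqP; split.
  by move=> _ [x Kx <-]; exact: subK_mul.
move=> k Kk; apply: contrapT => nHk.
pose H := [set x *+ 2 | x in K].
have ch : continuous (fun x : X => x *+ 2).
  have -> : (fun x : X => x *+ 2) = (fun x => x + x) by apply/funext => x; rewrite mulr2n.
  by apply: contD => x; exact: cvg_id.
have Hc : compact H := continuous_compact (continuous_subspaceT ch) Kc.
have Hcl : closed H := compact_closed hs Hc.
have mH : measurable (H : set (BX X)).
  by rewrite -(setCK H); apply: measurableC; apply: open_mBX; exact: closed_openC.
pose O' := (fun z : X => z + k) @^-1` (~` H).
have oO' : open O' by apply: open_comp; [move=> x _; exact: cont_trans | exact: closed_openC].
pose Wo := (fun p : X * X => p.1 + p.2) @^-1` O'.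
have oWo : open Wo by apply: open_comp => // x _; exact: add_continuous.
have W00 : Wo (0, 0) by rewrite /Wo /O' /= !add0r.
have : nbhs ((0, 0) : X * X) Wo by apply: open_nbhs_nbhs.
move=> [[A1 A2] [/= nA1 nA2] sA].
pose V0 := interior (A1 `&` A2).
have oV0 : open V0 by exact: open_interior.
have V00 : V0 0 by apply: filterI.
have sV0 : V0 `<=` A1 `&` A2 by exact: interior_subset.
have mV0 : measurable (V0 : set (BX X)) by exact: open_mBX.
have pos1 := @haar_pos R X K Kc d T P xi1 m1 K1 inv1 mK V0 oV0 V00.
have pos2 := @haar_pos R X K Kc d T P xi2 m2 K2 inv2 mK V0 oV0 V00.
have mkV : measurable ([set k + y | y in V0] : set (BX X)) by exact: mtrans.
pose E := xi1 @^-1` V0 `&` xi2 @^-1` [set k + y | y in V0] `&` xi3 @^-1` K `&` alpha @^-1` setT.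
have PE : P E = (P (xi1 @^-1` V0) * P (xi2 @^-1` V0))%E.
  rewrite /E ind // /law inv2 // K3 preimage_setT PT !mule1 //.
have mE : measurable E.
  apply: measurableI => //; apply: measurableI; [apply: measurableI|].
  - exact: (mpre m1).
  - exact: (mpre m2).
  - exact: (mpre m3).
have dis : Y @^-1` H `&` E = set0.
  apply/seteqP; split => t // [[c Kc' e]] [[[/= x1V [b Vb e2]] x3K] _].
  have := sA (xi1 t, b) (conj (sV0 _ x1V).1 (sV0 _ Vb).2).
  rewrite /Wo /O' /= => nH; apply: nH.
  exists (c - xi3 t *+ alpha t).
    apply: subK_add => //; apply: subK_opp => //; exact: subK_mul.
  rewrite mulrnBl e /Y -e2 -mulrnA mulnC addrK.
  by rewrite addrA addrAC.
have e' : P (h1 @^-1` H) = P (Y @^-1` H) := idd H mH.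
have h1H : P (h1 @^-1` H) = 1%E.
  apply/eqP; rewrite eq_le probability_le1 /=; last exact: (mpre mh1).
  rewrite -[X in (X <= _)%E]K1; apply: le_measure; rewrite ?in_setE.
  - exact: (mpre m1).
  - exact: (mpre mh1).
  - by move=> t /= Kt; exists (xi1 t).
have : (P (Y @^-1` H) + P E <= 1)%E.
  rewrite -measureU //; last exact: (mpre mY).
  apply: probability_le1; apply: measurableU => //; exact: (mpre mY).
rewrite -e' h1H PE -[X in (_ <= X)%E]adde0 leeD2lE //.
move/(lt_le_trans (mule_gt0 pos1 pos2)); by rewrite ltxx.
Qed.
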